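(* Let $W$ be a binary-input cq channel, $N=2^n$, $\mathcal A\subset\{1,\dots,N\}$ with $|\mathcal A|=K$. Then $$P_e(N,K,\mathcal A)\le 2\sqrt{\sum_{i\in\mathcal A}\tfrac12\sqrt{F(W_N^{(i)})}}.$$ Consequently, for each $(N,K,\mathcal A)$ there exists a frozen vector $u_{\mathcal A^c}\in\{0,1\}^{\mathcal A^c}$ with $P_e(N,K,\mathcal A,u_{\mathcal A^c})\le 2\sqrt{\sum_{i\in\mathcal A}\tfrac12\sqrt{F(W_N^{(i)})}}$.
   Context: A binary-input cq channel $W$ assigns to $x\in\{0,1\}$ a density operator $\rho_x$ on a finite-dimensional Hilbert space; for $V:x\mapsto\sigma_x$, $F(V)=\|\sqrt{\sigma_0}\sqrt{\sigma_1}\|_1^2$. Channel combining: for $N=2^n$ define $\rho_{u^N}$ on $B^N=B_1\cdots B_N$ recursively by $\rho_{u_1}=\rho_{u_1}$ ($N=1$) and $\rho_{u^{2N}}=\rho^{B_1\cdots B_N}_{u_o\oplus u_e}\otimes\rho^{B_{N+1}\cdots B_{2N}}_{u_e}$ with $u_o=(u_1,u_3,\dots)$, $u_e=(u_2,u_4,\dots)$. Let $\overline\rho_{u_1^i}=\sum_{u_{i+1}^N}2^{-(N-i)}\rho_{u^N}$, and the split channel $W_N^{(i)}:u_i\mapsto\sum_{u_1^{i-1}}2^{-(i-1)}|u_1^{i-1}\rangle\langle u_1^{i-1}|\otimes\overline\rho_{u_1^i}$ (classical register $U_1^{i-1}$ with orthonormal basis $\{|u_1^{i-1}\rangle\}$).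 Decoder projectors: for $i\in\mathcal A$, $\Pi_{(i),u_1^{i-1}0}=\{\sqrt{\overline\rho_{u_1^{i-1}0}}-\sqrt{\overline\rho_{u_1^{i-1}1}}\ge0\}$ and $\Pi_{(i),u_1^{i-1}1}=I-\Pi_{(i),u_1^{i-1}0}$, where $\{B\ge0\}$ is the projector onto the span of eigenvectors of the Hermitian $B$ with nonnegative eigenvalues; for $i\notin\mathcal A$ (frozen positions), $\Pi_{(i),u_1^{i-1}u_i}=I$. With $\Pi_i:=\Pi_{(i),u_1^{i-1}u_i}$ (depending on $u^N$), the error probability for frozen vector $u_{\mathcal A^c}$ is $P_e(N,K,\mathcal A,u_{\mathcal A^c})=1-2^{-K}\sum_{u_{\mathcal A}}\mathrm{Tr}\{\Pi_N\cdots\Pi_1\rho_{u^N}\Pi_1\cdots\Pi_N\}$, where $u^N$ is assembled from $u_{\mathcal A}$ and $u_{\mathcal A^c}$; and $P_e(N,K,\mathcal A)=2^{-(N-K)}\sum_{u_{\mathcal A^c}}P_e(N,K,\mathcal A,u_{\mathcal A^c})=1-2^{-N}\sum_{u^N}\mathrm{Tr}\{\Pi_N\cdots\Pi_1\rho_{u^N}\Pi_1\cdots\Pi_N\}$. *)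

(* Defs.v *)
(* Complex scalars are modelled by an arbitrary
   numClosedFieldType C (e.g. the complex numbers). *)
From HB Require Import structures.
From mathcomp Require Import all_boot all_order all_algebra.
Set Implicit Arguments.
Unset Strict Implicit.
Unset Printing Implicit Defensive.
Import Order.TTheory GRing.Theory Num.Theory.
Local Open Scope ring_scope.

Definition adjmx (C : numClosedFieldType) m n (A : 'M[C]_(m, n)) : 'M[C]_(n, m) :=
  (map_mx Num.conj A)^T.

Definition psdmx (C : numClosedFieldType) d (A : 'M[C]_d) : Prop :=
  adjmx A = A /\ forall v : 'rV[C]_d, 0 <= (v *m A *m adjmx v) 0 0.

Definition densitymx (C : numClosedFieldType) d (A : 'M[C]_d) : Prop :=
  psdmx A /\ \tr A = 1.

(* functional calculus for normal matrices via the spectral decomposition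
   A = P^-1 diag(lambda) P  (P unitary) of mathcomp's spectral.v *)
Definition fun_mx (C : numClosedFieldType) d (f : C -> C) (A : 'M[C]_d) : 'M[C]_d :=
  invmx (spectralmx A) *m diag_mx (map_mx f (spectral_diag A)) *m spectralmx A.

Definition sqrtmx (C : numClosedFieldType) d (A : 'M[C]_d) : 'M[C]_d :=
  fun_mx (fun x : C => sqrtC x) A.

Definition nonneg_proj (C : numClosedFieldType) d (B : 'M[C]_d) : 'M[C]_d :=
  fun_mx (fun x : C => if 0 <= x then 1 else 0) B.

Definition trnorm (C : numClosedFieldType) d (X : 'M[C]_d) : C :=
  \tr (sqrtmx (adjmx X *m X)).

Definition Fid (C : numClosedFieldType) d (s : bool -> 'M[C]_d) : C :=
  trnorm (sqrtmx (s false) *m sqrtmx (s true)) ^+ 2.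

(* Kronecker product; index k of 'I_(m1*m2) <-> pair (i1,i2), lexicographic *)
Definition tensmx (C : numClosedFieldType) m1 n1 m2 n2
    (A : 'M[C]_(m1, n1)) (B : 'M[C]_(m2, n2)) : 'M[C]_(m1 * m2, n1 * n2) :=
  \matrix_(k, l)
    (let p := enum_val (cast_ord (esym (@mxvec_cast m1 m2)) k) in
     let q := enum_val (cast_ord (esym (@mxvec_cast n1 n2)) l) in
     A p.1 q.1 * B p.2 q.2).

(* dimension of B^N for N = 2^n copies of a d-dimensional system:
   dimN d n = d^(2^n) *)
Fixpoint dimN (d n : nat) : nat :=
  if n is n'.+1 then (dimN d n' * dimN d n')%N else d.

(* channel combining: rho_{u^N}, N = 2^n; bit sequences are 0-indexed
   (u k = paper's u_{k+1}); u_o = even 0-indexed positions, u_e = odd ones *)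
Fixpoint rhoN (C : numClosedFieldType) d (W : bool -> 'M[C]_d) (n : nat)
  : (nat -> bool) -> 'M[C]_(dimN d n) :=
  match n return (nat -> bool) -> 'M[C]_(dimN d n) with
  | 0 => fun u => W (u 0%N)
  | n'.+1 => fun u =>
      tensmx (rhoN W n' (fun k => u k.*2 (+) u k.*2.+1))
             (rhoN W n' (fun k => u k.*2.+1))
  end.

Definition bits_of (N : nat) (v : {ffun 'I_N -> bool}) : nat -> bool :=
  fun k => if (insub k : option 'I_N) is Some i then v i else false.

Definition rho (C : numClosedFieldType) d (W : bool -> 'M[C]_d) (n : nat)
  (u : {ffun 'I_(2 ^ n) -> bool}) : 'M[C]_(dimN d n) := rhoN W n (bits_of u).

(* overline rho_{u_1^len}: average over u_{len+1}^N of rho_{u^N}, where the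
   prefix (0-indexed positions k < len) is given by pre *)
Definition rhobar (C : numClosedFieldType) d (W : bool -> 'M[C]_d) (n : nat)
  (len : nat) (pre : nat -> bool) : 'M[C]_(dimN d n) :=
  ((2 ^ (2 ^ n - len))%:R)^-1 *:
    \sum_(v : {ffun 'I_(2 ^ n) -> bool} |
            [forall k : 'I_(2 ^ n), (k < len)%N ==> (v k == pre k)])
      rho W v.

(* the (0-indexed) bit j of k, used to label the classical register *)
Definition bit_of (k j : nat) : bool := odd (k %/ 2 ^ j).

(* split channel W_N^{(i+1)} (0-indexed position i): on input b it outputs
   sum_{u_1^i} 2^-i |u_1^i><u_1^i| (x) overline rho_{u_1^i b};
   the register basis vectors |u_1^i> are labelled by k : 'I_(2^i)
   via the binary expansion of k *)
Definition split_chan (C : numClosedFieldType) d (W : bool -> 'M[C]_d) (n : nat)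
  (i : 'I_(2 ^ n)) (b : bool) : 'M[C]_(2 ^ i * dimN d n) :=
  \sum_(k < 2 ^ i)
    ((2 ^ i)%:R)^-1 *:
      tensmx (delta_mx k k)
        (rhobar W n i.+1 (fun j => if j == nat_of_ord i then b else bit_of k j)).

(* decoder projector Pi_{(i+1), u_1^i u_{i+1}} (0-indexed position i),
   for information set A *)
Definition dec_proj (C : numClosedFieldType) d (W : bool -> 'M[C]_d) (n : nat)
  (A : {set 'I_(2 ^ n)}) (u : {ffun 'I_(2 ^ n) -> bool}) (i : 'I_(2 ^ n))
  : 'M[C]_(dimN d n) :=
  if i \in A then
    let pre b := fun j : nat => if j == nat_of_ord i then b else bits_of u j in
    let P0 := nonneg_proj (sqrtmx (rhobar W n i.+1 (pre false))
                           - sqrtmx (rhobar W n i.+1 (pre true))) in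
    if u i then 1%:M - P0 else P0
  else 1%:M.

(* Pi_N ... Pi_1 *)
Definition proj_seq_left (C : numClosedFieldType) d (W : bool -> 'M[C]_d) (n : nat)
  (A : {set 'I_(2 ^ n)}) (u : {ffun 'I_(2 ^ n) -> bool}) : 'M[C]_(dimN d n) :=
  foldl (fun M i => dec_proj W A u i *m M) 1%:M (enum 'I_(2 ^ n)).

(* Pi_1 ... Pi_N *)
Definition proj_seq_right (C : numClosedFieldType) d (W : bool -> 'M[C]_d) (n : nat)
  (A : {set 'I_(2 ^ n)}) (u : {ffun 'I_(2 ^ n) -> bool}) : 'M[C]_(dimN d n) :=
  foldr (fun i M => dec_proj W A u i *m M) 1%:M (enum 'I_(2 ^ n)).

Definition succ_term (C : numClosedFieldType) d (W : bool -> 'M[C]_d) (n : nat)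
  (A : {set 'I_(2 ^ n)}) (u : {ffun 'I_(2 ^ n) -> bool}) : C :=
  \tr (proj_seq_left W A u *m rho W u *m proj_seq_right W A u).

(* P_e(N,K,A,u_{A^c}); the frozen vector is given as a full vector uf whose
   entries on A are ignored; u^N ranges over vectors agreeing with uf off A *)
Definition Pe_frozen (C : numClosedFieldType) d (W : bool -> 'M[C]_d) (n K : nat)
  (A : {set 'I_(2 ^ n)}) (uf : {ffun 'I_(2 ^ n) -> bool}) : C :=
  1 - ((2 ^ K)%:R)^-1 *
      \sum_(u : {ffun 'I_(2 ^ n) -> bool} |
              [forall k : 'I_(2 ^ n), (k \notin A) ==> (u k == uf k)])
        succ_term W A u.

Definition Pe (C : numClosedFieldType) d (W : bool -> 'M[C]_d) (n K : nat)
  (A : {set 'I_(2 ^ n)}) : C :=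
  1 - ((2 ^ (2 ^ n))%:R)^-1 * \sum_(u : {ffun 'I_(2 ^ n) -> bool}) succ_term W A u.

Definition Pe_bound (C : numClosedFieldType) d (W : bool -> 'M[C]_d) (n : nat)
  (A : {set 'I_(2 ^ n)}) : C :=
  2 * sqrtC (\sum_(i in A) 2^-1 * sqrtC (Fid (split_chan W i))).

(* Main.v *)
Require Import Defs.
From HB Require Import structures.
From mathcomp Require Import all_boot all_order all_algebra.
From mathcomp Require Import spectral sesquilinear ring.
Set Implicit Arguments.
Unset Strict Implicit.
Unset Printing Implicit Defensive.
Import Order.TTheory GRing.Theory Num.Theory.
Local Open Scope ring_scope.

Section L1.
Variable C : numClosedFieldType.

Lemma adjmxE m n (A : 'M[C]_(m, n)) : adjmx A = (A ^t*)%sesqui.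
Proof. by rewrite /adjmx map_trmx. Qed.

Lemma adjmx_entry m n (A : 'M[C]_(m, n)) i j : adjmx A i j = (A j i)^*.
Proof. by rewrite !mxE. Qed.

Lemma adjmxK m n (A : 'M[C]_(m, n)) : adjmx (adjmx A) = A.
Proof. by apply/matrixP=> i j; rewrite !mxE conjCK. Qed.

Lemma adjmxM m n p (A : 'M[C]_(m, n)) (B : 'M[C]_(n, p)) :
  adjmx (A *m B) = adjmx B *m adjmx A.
Proof.
apply/matrixP=> i j; rewrite !mxE rmorph_sum; apply: eq_bigr=> k _.
by rewrite !mxE rmorphM mulrC.
Qed.

Lemma adjmxD m n (A B : 'M[C]_(m, n)) : adjmx (A + B) = adjmx A + adjmx B.
Proof. by apply/matrixP=> i j; rewrite !mxE rmorphD. Qed.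

Lemma adjmxN m n (A : 'M[C]_(m, n)) : adjmx (- A) = - adjmx A.
Proof. by apply/matrixP=> i j; rewrite !mxE rmorphN. Qed.

Lemma adjmxB m n (A B : 'M[C]_(m, n)) : adjmx (A - B) = adjmx A - adjmx B.
Proof. by rewrite adjmxD adjmxN. Qed.

Lemma adjmxZ m n (a : C) (A : 'M[C]_(m, n)) : adjmx (a *: A) = a^* *: adjmx A.
Proof. by apply/matrixP=> i j; rewrite !mxE rmorphM. Qed.

Lemma adjmx0 m n : adjmx (0 : 'M[C]_(m, n)) = 0.
Proof. by apply/matrixP=> i j; rewrite !mxE rmorph0. Qed.

Lemma adjmx1 n : adjmx (1%:M : 'M[C]_n) = 1%:M.
Proof. by apply/matrixP=> i j; rewrite !mxE eq_sym; case: eqP; rewrite ?rmorph1 ?rmorph0. Qed.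

Lemma adjmx_sum m n I (r : seq I) (P : pred I) (F : I -> 'M[C]_(m, n)) :
  adjmx (\sum_(i <- r | P i) F i) = \sum_(i <- r | P i) adjmx (F i).
Proof. exact: (big_morph (@adjmx C m n) (@adjmxD m n) (@adjmx0 m n)). Qed.

Lemma adjmx_diag n (d : 'rV[C]_n) : adjmx (diag_mx d) = diag_mx (map_mx Num.conj d).
Proof.
apply/matrixP=> i j; rewrite !mxE eq_sym; case: eqP => [->|]; rewrite ?mulr1n ?mulr0n //.
by rewrite rmorph0.
Qed.

Lemma mxtrace_adj n (A : 'M[C]_n) : \tr (adjmx A) = (\tr A)^*.
Proof. by rewrite /mxtrace rmorph_sum; apply: eq_bigr=> i _; rewrite !mxE. Qed.

Definition unitary n (U : 'M[C]_n) := U *m adjmx U = 1%:M /\ adjmx U *m U = 1%:M.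

Lemma unitary_of n (U : 'M[C]_n) : U \is unitarymx -> unitary U.
Proof.
move=> Uu; have Uinv := invmx_unitary Uu.
have Uun := unitarymx_unit Uu.
by rewrite /unitary adjmxE -Uinv mulmxV // mulVmx.
Qed.

Lemma spectral_unitary n (A : 'M[C]_n) : unitary (spectralmx A).
Proof. exact/unitary_of/spectral_unitarymx. Qed.

Definition herm n (A : 'M[C]_n) := adjmx A = A.

Lemma herm_hermsym n (A : 'M[C]_n) : herm A -> A \is hermsymmx.
Proof.
move=> hA; apply/eqP; rewrite expr0 scale1r -[LHS]hA adjmxE.
by apply/matrixP=> i j; rewrite !mxE.
Qed.

Lemma herm_spectral n (A : 'M[C]_n) : herm A ->
  A = adjmx (spectralmx A) *m diag_mx (spectral_diag A) *m spectralmx A.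
Proof.
move=> hA; have /hermitian_normalmx /orthomx_spectralP := herm_hermsym hA.
by rewrite invmx_unitary ?spectral_unitarymx // -adjmxE.
Qed.

Lemma herm_spectral_real n (A : 'M[C]_n) (hA : herm A) i :
  spectral_diag A 0 i \is Num.real.
Proof.
have /hermitian_spectral_diag_real /mxOverP := herm_hermsym hA.
by apply.
Qed.

End L1.


Section L2.
Variable C : numClosedFieldType.

Definition spec n (U : 'M[C]_n) (d : 'rV[C]_n) := adjmx U *m diag_mx d *m U.

Definition rowmul n (d e : 'rV[C]_n) : 'rV[C]_n := \row_j (d 0 j * e 0 j).

Lemma spec_mul n (U : 'M[C]_n) d e : unitary U ->
  spec U d *m spec U e = spec U (rowmul d e).
Proof.
case=> UU _; rewrite /spec.
have -> : adjmx U *m diag_mx d *m U *m (adjmx U *m diag_mx e *m U) =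
  adjmx U *m (diag_mx d *m (U *m adjmx U) *m diag_mx e) *m U by rewrite !mulmxA.
by rewrite UU mulmx1 mulmx_diag.
Qed.

Lemma adjmx_spec n (U : 'M[C]_n) d : adjmx (spec U d) = spec U (map_mx Num.conj d).
Proof. by rewrite /spec !adjmxM adjmxK adjmx_diag mulmxA. Qed.

Lemma tr_spec n (U : 'M[C]_n) d : unitary U -> \tr (spec U d) = \sum_i d 0 i.
Proof.
case=> UU _; rewrite /spec mxtrace_mulC mulmxA UU mul1mx /mxtrace.
by apply: eq_bigr=> i _; rewrite mxE eqxx mulr1n.
Qed.

Lemma quad_diag m n (v : 'M[C]_(m, n)) d i :
  (v *m diag_mx d *m adjmx v) i i = \sum_j d 0 j * `|v i j| ^+ 2.
Proof.
rewrite mul_mx_diag mxE; apply: eq_bigr=> j _; rewrite !mxE normCK.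
by rewrite mulrCA mulrA.
Qed.

Lemma quad_spec n (U : 'M[C]_n) d (v : 'rV[C]_n) :
  (v *m spec U d *m adjmx v) 0 0 = \sum_j d 0 j * `|(v *m adjmx U) 0 j| ^+ 2.
Proof.
by rewrite /spec !mulmxA -quad_diag adjmxM adjmxK !mulmxA.
Qed.

Lemma psd_spec n (U : 'M[C]_n) (d : 'rV[C]_n) : (forall i, 0 <= d 0 i) -> psdmx (spec U d).
Proof.
move=> d0; split.
  rewrite adjmx_spec; congr spec; apply/rowP=> i; rewrite mxE.
  by rewrite conj_Creal // ger0_real.
move=> v; rewrite quad_spec; apply: sumr_ge0 => j _.
by rewrite mulr_ge0 // exprn_ge0.
Qed.

Lemma spec_fun n (U V : 'M[C]_n) d e (f : C -> C) :
  unitary U -> unitary V -> spec U d = spec V e ->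
  spec U (map_mx f d) = spec V (map_mx f e).
Proof.
move=> [UU UU'] [VV VV'] eqUV.
pose Wm := V *m adjmx U.
have WD : Wm *m diag_mx d = diag_mx e *m Wm.
  have h := congr1 (fun X => V *m X *m adjmx U) eqUV; move: h; rewrite /spec /=.
  have -> : V *m (adjmx U *m diag_mx d *m U) *m adjmx U =
     V *m adjmx U *m diag_mx d *m (U *m adjmx U) by rewrite !mulmxA.
  have -> : V *m (adjmx V *m diag_mx e *m V) *m adjmx U =
     (V *m adjmx V) *m diag_mx e *m (V *m adjmx U) by rewrite !mulmxA.
  by rewrite UU VV mulmx1 mul1mx.
have defW : Wm = V *m adjmx U by [].
clearbody Wm.
have WF : Wm *m diag_mx (map_mx f d) = diag_mx (map_mx f e) *m Wm.
  apply/matrixP=> i j; move/matrixP: WD => /(_ i j).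
  rewrite !mul_mx_diag !mul_diag_mx !mxE.
  have [W0|Wnz] := eqVneq (Wm i j) 0; first by move=> _; rewrite W0 mulr0 mul0r.
  move=> h; have de : d 0 j = e 0 i by apply: (mulIf Wnz); rewrite mulrC h.
  by rewrite de mulrC.
rewrite /spec.
have -> : adjmx U = adjmx V *m Wm by rewrite defW mulmxA VV' mul1mx.
rewrite -[adjmx V *m Wm *m _]mulmxA WF defW !mulmxA -(mulmxA _ (adjmx U)) UU'.
by rewrite mulmx1.
Qed.

Lemma fun_mx_spec n (A : 'M[C]_n) f U d : herm A -> unitary U -> A = spec U d ->
  fun_mx f A = spec U (map_mx f d).
Proof.
move=> hA uU eA; rewrite /fun_mx invmx_unitary ?spectral_unitarymx // -adjmxE.
apply: spec_fun => //; first exact: spectral_unitary.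
by rewrite -eA /spec -herm_spectral.
Qed.

Lemma fun_mx_herm n (A : 'M[C]_n) f : herm A ->
  fun_mx f A = spec (spectralmx A) (map_mx f (spectral_diag A)).
Proof.
move=> hA; apply: fun_mx_spec => //; first exact: spectral_unitary.
exact: herm_spectral.
Qed.

Lemma psd_herm n (A : 'M[C]_n) : psdmx A -> herm A.
Proof. by case. Qed.

Lemma psd_eig n (A : 'M[C]_n) (pA : psdmx A) i : 0 <= spectral_diag A 0 i.
Proof.
have hA := psd_herm pA; have [UU UU'] := spectral_unitary A.
have := pA.2 (row i (spectralmx A)).
have -> : (row i (spectralmx A) *m A *m adjmx (row i (spectralmx A))) 0 0 =
          (spectralmx A *m A *m adjmx (spectralmx A)) i i.
  rewrite !mxE; apply: eq_bigr => k _; rewrite !mxE; congr (_ * _).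
  by apply: eq_bigr=> l _; rewrite !mxE.
rewrite {2}(herm_spectral hA) !mulmxA UU mul1mx -mulmxA UU mulmx1.
by rewrite !mxE eqxx mulr1n.
Qed.

End L2.


Section L3.
Variable C : numClosedFieldType.
Implicit Types n : nat.

Lemma sqrtmx_spec n (A : 'M[C]_n) : psdmx A ->
  sqrtmx A = spec (spectralmx A) (map_mx (fun x => sqrtC x) (spectral_diag A)).
Proof. by move=> pA; rewrite /sqrtmx fun_mx_herm //; case: pA. Qed.

Lemma sqrtmx_psd n (A : 'M[C]_n) : psdmx A -> psdmx (sqrtmx A).
Proof.
move=> pA; rewrite sqrtmx_spec //; apply: psd_spec => i.
by rewrite mxE sqrtC_ge0 psd_eig.
Qed.

Lemma sqrtmx_herm n (A : 'M[C]_n) : psdmx A -> herm (sqrtmx A).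
Proof. by move=> /sqrtmx_psd []. Qed.

Lemma sqrtmx_sq n (A : 'M[C]_n) : psdmx A -> sqrtmx A *m sqrtmx A = A.
Proof.
move=> pA; rewrite sqrtmx_spec // spec_mul; last exact: spectral_unitary.
rewrite [RHS](herm_spectral (psd_herm pA)); congr spec; apply/rowP=> i.
by rewrite !mxE -expr2 sqrtCK.
Qed.

Lemma herm_mul_sq n (S : 'M[C]_n) : herm S -> herm (S *m S).
Proof. by rewrite /herm adjmxM => ->. Qed.

Lemma sqrtmx_unique n (S : 'M[C]_n) : psdmx S -> sqrtmx (S *m S) = S.
Proof.
move=> pS; have hS := psd_herm pS.
have uV := spectral_unitary S.
have eS := herm_spectral hS.
have eSS : S *m S = spec (spectralmx S)
    (rowmul (spectral_diag S) (spectral_diag S)).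
  by rewrite -spec_mul //; rewrite /spec -eS.
rewrite /sqrtmx (fun_mx_spec _ (herm_mul_sq hS) uV eSS) [RHS]eS.
congr spec; apply/rowP=> i; rewrite !mxE -expr2 sqrCK //.
exact: psd_eig.
Qed.

Lemma psd_adj_mul m n (Y : 'M[C]_(m, n)) : psdmx (adjmx Y *m Y).
Proof.
split; first by rewrite adjmxM adjmxK.
move=> v; set w := v *m adjmx Y.
have -> : v *m (adjmx Y *m Y) *m adjmx v = w *m adjmx w.
  by rewrite /w adjmxM adjmxK !mulmxA.
rewrite mxE sumr_ge0 // => k _; rewrite !mxE -normCK exprn_ge0 //.
Qed.

Lemma tr_conj_psd m n (G : 'M[C]_n) (Z : 'M[C]_(m, n)) : psdmx G ->
  0 <= \tr (Z *m G *m adjmx Z).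
Proof.
move=> [_ pG]; rewrite /mxtrace sumr_ge0 // => k _.
have := pG (row k Z).
have -> : (row k Z *m G *m adjmx (row k Z)) 0 0 = (Z *m G *m adjmx Z) k k.
  rewrite !mxE; apply: eq_bigr => j _; rewrite !mxE; congr (_ * _).
  by apply: eq_bigr=> l _; rewrite !mxE.
by [].
Qed.

Lemma tr_psd_mul n (G H : 'M[C]_n) : psdmx G -> psdmx H -> 0 <= \tr (G *m H).
Proof.
move=> pG pH; rewrite -(sqrtmx_sq pH) mulmxA mxtrace_mulC mulmxA.
by rewrite -{2}(sqrtmx_herm pH); apply: tr_conj_psd.
Qed.

Lemma psdD n (A B : 'M[C]_n) : psdmx A -> psdmx B -> psdmx (A + B).
Proof.
move=> [hA pA] [hB pB]; split; first by rewrite adjmxD hA hB.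
by move=> v; rewrite mulmxDr mulmxDl mxE addr_ge0.
Qed.

Lemma psdZ n c (A : 'M[C]_n) : 0 <= c -> psdmx A -> psdmx (c *: A).
Proof.
move=> c0 [hA pA]; split; first by rewrite adjmxZ hA conj_Creal // ger0_real.
by move=> v; rewrite -scalemxAr -scalemxAl mxE mulr_ge0.
Qed.

Lemma psd0 n : psdmx (0 : 'M[C]_n).
Proof. by split; [rewrite adjmx0 | move=> v; rewrite mulmx0 mul0mx mxE]. Qed.

Lemma psd_sum n I (r : seq I) (P : pred I) (F : I -> 'M[C]_n) :
  (forall i, P i -> psdmx (F i)) -> psdmx (\sum_(i <- r | P i) F i).
Proof.
move=> h; elim/big_rec: _ => [|i x Pi px]; first exact: psd0.
exact: psdD (h i Pi) px.
Qed.

Lemma psd_conj m n (G : 'M[C]_n) (Z : 'M[C]_(m, n)) : psdmx G ->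
  psdmx (Z *m G *m adjmx Z).
Proof.
move=> [hG pG]; split; first by rewrite !adjmxM adjmxK hG mulmxA.
move=> v; have := pG (v *m Z); by rewrite adjmxM !mulmxA.
Qed.

Lemma psd_tr_ge0 n (G : 'M[C]_n) : psdmx G -> 0 <= \tr G.
Proof.
move=> pG; have := tr_conj_psd (1%:M : 'M[C]_n) pG.
by rewrite adjmx1 mulmx1 mul1mx.
Qed.

Lemma trnorm_ge0 n (Z : 'M[C]_n) : 0 <= trnorm Z.
Proof. exact/psd_tr_ge0/sqrtmx_psd/psd_adj_mul. Qed.

Lemma norm_tr_le_trnorm n (Z : 'M[C]_n) : `|\tr Z| <= trnorm Z.
Proof.
rewrite /trnorm; set G := adjmx Z *m Z.
have pG : psdmx G by exact: psd_adj_mul.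
set V := spectralmx G; set mu := spectral_diag G.
have [VV VV'] : unitary V by exact: spectral_unitary.
rewrite sqrtmx_spec // tr_spec; last exact: spectral_unitary.
have -> : \tr Z = \tr (V *m Z *m adjmx V).
  by rewrite mxtrace_mulC mulmxA VV' mul1mx.
rewrite /mxtrace; apply: le_trans (ler_norm_sum _ _ _) _.
apply: ler_sum => j _; rewrite [X in _ <= X]mxE.
pose u : 'rV[C]_n := row j V.
pose w : 'rV[C]_n := \row_k ((Z *m adjmx V) k j)^*.
have xj : (V *m Z *m adjmx V) j j = dotmx u w.
  rewrite dotmxE -mulmxA !mxE; apply: eq_bigr=> k _; rewrite !mxE conjCK.
  by [].
have uu : dotmx u u = 1.
  have <- : (V *m adjmx V) j j = 1 by rewrite VV mxE eqxx.
  rewrite dotmxE !mxE; by apply: eq_bigr=> k _; rewrite !mxE.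
have ww : dotmx w w = mu 0 j.
  have e : mu 0 j = (V *m G *m adjmx V) j j.
    rewrite [X in V *m X *m _](herm_spectral (psd_herm pG)) -/V -/mu.
    by rewrite !mulmxA VV mul1mx -mulmxA VV mulmx1 mxE eqxx mulr1n.
  rewrite e.
  have -> : V *m G *m adjmx V = adjmx (Z *m adjmx V) *m (Z *m adjmx V).
    by rewrite adjmxM adjmxK !mulmxA.
  rewrite dotmxE !mxE; apply: eq_bigr=> k _; rewrite !mxE conjCK mulrC.
  by [].
have cs : `|dotmx u w| ^+ 2 <= dotmx u u * dotmx w w := (@CauchySchwarz C _ (@dotmx C n) u w).1.
rewrite uu ww mul1r -xj in cs.
have m0 : 0 <= mu 0 j by exact: psd_eig.
rewrite -(ler_sqrtC (x := `|_| ^+ 2)) ?nnegrE ?exprn_ge0 // in cs.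
by rewrite sqrCK // in cs.
Qed.

End L3.


Section Gao.
Variable C : numClosedFieldType.
Variable n : nat.
Variable rho : 'M[C]_n.
Hypothesis prho : psdmx rho.

Definition Bf (X Y : 'M[C]_n) := \tr (X *m rho *m adjmx Y).

Lemma BDl X X' Y : Bf (X + X') Y = Bf X Y + Bf X' Y.
Proof. by rewrite /Bf !mulmxDl mxtraceD. Qed.
Lemma BDr X Y Y' : Bf X (Y + Y') = Bf X Y + Bf X Y'.
Proof. by rewrite /Bf adjmxD mulmxDr mxtraceD. Qed.
Lemma BNl X Y : Bf (- X) Y = - Bf X Y.
Proof. by rewrite /Bf !mulNmx (raddfN (@mxtrace _ _)). Qed.
Lemma BNr X Y : Bf X (- Y) = - Bf X Y.
Proof. by rewrite /Bf adjmxN mulmxN (raddfN (@mxtrace _ _)). Qed.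
Lemma BBl X X' Y : Bf (X - X') Y = Bf X Y - Bf X' Y.
Proof. by rewrite BDl BNl. Qed.
Lemma BBr X Y Y' : Bf X (Y - Y') = Bf X Y - Bf X Y'.
Proof. by rewrite BDr BNr. Qed.
Lemma BZl (c : C) X Y : Bf (c *: X) Y = c * Bf X Y.
Proof. by rewrite /Bf -!scalemxAl mxtraceZ. Qed.
Lemma BZr (c : C) X Y : Bf X (c *: Y) = c^* * Bf X Y.
Proof. by rewrite /Bf adjmxZ -scalemxAr mxtraceZ. Qed.
Lemma Bherm Q X Y : herm Q -> Bf (Q *m X) Y = Bf X (Q *m Y).
Proof.
move=> hQ; rewrite /Bf adjmxM hQ !mulmxA [RHS]mxtrace_mulC.
by rewrite !mulmxA.
Qed.
Lemma Bge0 X : 0 <= Bf X X.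
Proof. exact: tr_conj_psd. Qed.

Lemma gao_step (M Pi : 'M[C]_n) : herm Pi -> Pi *m Pi = Pi ->
  let Q := 1%:M - Pi in
  let f M := \tr rho - Bf M M + 2 * Bf (1%:M - M) (1%:M - M) in
  f (Pi *m M) = f M + 4 * Bf Q Q - Bf (Q *m M - 2%:R *: Q) (Q *m M - 2%:R *: Q).
Proof.
move=> hP PP Q f.
have hQ : herm Q by rewrite /herm /Q adjmxB adjmx1 hP.
have QQ : Q *m Q = Q.
  by rewrite /Q mulmxBl mul1mx mulmxBr mulmx1 PP subrr subr0.
have ePM : Pi *m M = M - Q *m M by rewrite /Q mulmxBl mul1mx opprB addrC subrK.
rewrite /f ePM.
clearbody Q.
set q := Q *m M.
have e1 : 1%:M - (M - q) = (1%:M - M) + q by rewrite opprB addrA addrAC.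
rewrite e1.
rewrite !(BDl, BDr, BNl, BNr, BZl, BZr).
have rqq : Bf q q = Bf M q by rewrite /q Bherm // mulmxA QQ.
have rqM : Bf q M = Bf M q by rewrite /q Bherm.
have rIq : Bf 1%:M q = Bf Q M by rewrite /q -Bherm // mulmx1.
have rQq : Bf Q q = Bf Q M by rewrite /q -Bherm // QQ.
have rqI : Bf q 1%:M = Bf M Q by rewrite /q Bherm // mulmx1.
have rqQ : Bf q Q = Bf M Q by rewrite /q Bherm // QQ.
rewrite rqq rqM rIq rQq rqI rqQ.
have c2 : (2%:R : C)^* = 2%:R by rewrite rmorph_nat.
rewrite c2.
ring.
Qed.

Lemma gao (I : Type) (s : seq I) (Pi : I -> 'M[C]_n) :
  (forall i, herm (Pi i) /\ Pi i *m Pi i = Pi i) ->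
  \tr rho - \tr (foldl (fun M i => Pi i *m M) 1%:M s *m rho *m
      adjmx (foldl (fun M i => Pi i *m M) 1%:M s)) <=
    4 * \sum_(i <- s) \tr ((1%:M - Pi i) *m rho).
Proof.
move=> hPi.
pose f M := \tr rho - Bf M M + 2 * Bf (1%:M - M) (1%:M - M).
have key : forall M, f (foldl (fun M i => Pi i *m M) M s) <=
    f M + 4 * \sum_(i <- s) \tr ((1%:M - Pi i) *m rho).
  elim: s => [|i s IH] M /=; first by rewrite big_nil mulr0 addr0.
  apply: le_trans (IH _) _.
  have [hP PP] := hPi i.
  rewrite [f (Pi i *m M)](gao_step M hP PP) -/(f M) big_cons mulrDr addrA lerD2r.
  have QQ : Bf (1%:M - Pi i) (1%:M - Pi i) = \tr ((1%:M - Pi i) *m rho).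
    rewrite /Bf adjmxB adjmx1 hP mxtrace_mulC mulmxA.
    by rewrite mulmxBl mul1mx mulmxBr mulmx1 PP subrr subr0.
  by rewrite QQ lerBlDr lerDl Bge0.
have f1 : f 1%:M = 0.
  rewrite /f subrr /Bf !mul1mx adjmx1 mulmx1 subrr.
  by rewrite !mul0mx mxtrace0 mulr0 addr0.
have := key 1%:M; rewrite f1 add0r.
apply: le_trans.
rewrite /f /Bf lerDl mulr_ge0 //.
exact: tr_conj_psd.
Qed.

End Gao.


Section Holevo.
Variable C : numClosedFieldType.
Variable n : nat.
Implicit Types D : 'M[C]_n.

Definition ind (x : C) : C := if 0 <= x then 1 else 0.

Lemma spec_const (U : 'M[C]_n) (a : C) : unitary U -> spec U (const_mx a) = a%:M.
Proof.
case=> _ UU; rewrite /spec diag_const_mx mul_mx_scalar -scalemxAl UU.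
by rewrite scalemx1.
Qed.

Lemma specB (U : 'M[C]_n) d e : spec U (d - e) = spec U d - spec U e.
Proof. by rewrite /spec raddfB /= mulmxBr mulmxBl. Qed.

Lemma specN (U : 'M[C]_n) d : spec U (- d) = - spec U d.
Proof. by rewrite /spec raddfN /= mulmxN mulNmx. Qed.

Section P.
Variable D : 'M[C]_n.
Hypothesis hD : herm D.
Let U := spectralmx D.
Let dl := spectral_diag D.
Let uU : unitary U := spectral_unitary D.

Lemma nnpE : nonneg_proj D = spec U (map_mx ind dl).
Proof. exact: fun_mx_herm. Qed.

Lemma DE : D = spec U dl.
Proof. exact: herm_spectral. Qed.

Lemma nnp_herm : herm (nonneg_proj D).
Proof.
rewrite /herm nnpE adjmx_spec; congr spec; apply/rowP=> i; rewrite !mxE /ind.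
by case: ifP; rewrite ?rmorph1 ?rmorph0.
Qed.

Lemma nnp_idem : nonneg_proj D *m nonneg_proj D = nonneg_proj D.
Proof.
rewrite nnpE spec_mul //; congr spec; apply/rowP=> i; rewrite !mxE /ind.
by case: ifP; rewrite ?mulr1 ?mulr0.
Qed.

Lemma nnp_psd : psdmx (nonneg_proj D).
Proof. rewrite nnpE; apply: psd_spec => i; rewrite mxE /ind; by case: ifP. Qed.

Lemma nnpC_psd : psdmx (1%:M - nonneg_proj D).
Proof.
rewrite nnpE -(spec_const 1 uU) -specB; apply: psd_spec => i; rewrite !mxE /ind.
by case: ifP; rewrite ?subrr ?subr0.
Qed.

Lemma nnpD_psd : psdmx (nonneg_proj D *m D).
Proof.
rewrite nnpE [X in _ *m X]DE spec_mul //; apply: psd_spec => i; rewrite !mxE /ind.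
by case: ifP => h; rewrite ?mul1r ?mul0r.
Qed.

Lemma nnpCD_psd : psdmx (- ((1%:M - nonneg_proj D) *m D)).
Proof.
rewrite nnpE -(spec_const 1 uU) -specB [X in _ *m X]DE spec_mul //.
rewrite -specN; apply: psd_spec => i; rewrite !mxE /ind.
have rl := herm_spectral_real hD i.
case: ifP => h; rewrite ?subrr ?mul0r ?subr0 ?sub0r ?mul1r ?oppr_ge0 //.
by rewrite real_leNgt ?rpred0 //; apply/negP => /ltW; rewrite h.
Qed.

Lemma nnp_comm : nonneg_proj D *m D = D *m nonneg_proj D.
Proof.
rewrite nnpE [in RHS]DE [X in _ *m X]DE !spec_mul //; congr spec; apply/rowP=> i.
by rewrite !mxE mulrC.
Qed.

End P.

Lemma holevo_iden (P D Y : 'M[C]_n) : P *m D = D *m P ->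
  \tr ((1%:M - P) *m ((D + Y) *m (D + Y))) + \tr (P *m (Y *m Y))
  + \tr (P *m D *m Y) + \tr (- ((1%:M - P) *m D) *m (D + Y)) =
  \tr ((D + Y) *m Y).
Proof.
move=> cm.
have t1 : \tr (Y *m D) = \tr (D *m Y) by rewrite mxtrace_mulC.
have t2 : \tr (P *m Y *m D) = \tr (P *m D *m Y).
  by rewrite mxtrace_mulC mulmxA -cm.
rewrite !(mulmxDl, mulmxDr, mulmxBl, mulmxBr, mulNmx, mulmxN, mul1mx).
rewrite !mulmxA.
rewrite !(mxtraceD, raddfN, raddfB (@mxtrace _ _)) /= t1 t2.
ring.
Qed.

Lemma holevo (R0 R1 : 'M[C]_n) : psdmx R0 -> psdmx R1 ->
  \tr ((1%:M - nonneg_proj (sqrtmx R0 - sqrtmx R1)) *m R0) +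
  \tr (nonneg_proj (sqrtmx R0 - sqrtmx R1) *m R1) <=
  trnorm (sqrtmx R0 *m sqrtmx R1).
Proof.
move=> p0 p1.
set X := sqrtmx R0; set Y := sqrtmx R1.
have pX : psdmx X by exact: sqrtmx_psd.
have pY : psdmx Y by exact: sqrtmx_psd.
set D := X - Y.
have hD : herm D by rewrite /herm /D adjmxB (psd_herm pX) (psd_herm pY).
set P := nonneg_proj D.
have eR0 : R0 = X *m X by rewrite sqrtmx_sq.
have eR1 : R1 = Y *m Y by rewrite sqrtmx_sq.
have eX : X = D + Y by rewrite /D subrK.
have a0 : 0 <= \tr (P *m D *m Y) by apply: tr_psd_mul => //; exact: nnpD_psd.
have c0 : 0 <= \tr (- ((1%:M - P) *m D) *m X).
  by apply: tr_psd_mul => //; exact: nnpCD_psd.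
have iden : \tr ((1%:M - P) *m R0) + \tr (P *m R1) + \tr (P *m D *m Y)
    + \tr (- ((1%:M - P) *m D) *m X) = \tr (X *m Y).
  have cm := nnp_comm hD; rewrite -/P in cm.
  rewrite eR0 eR1 eX; exact: holevo_iden.
have tXY : 0 <= \tr (X *m Y) by exact: tr_psd_mul.
apply: le_trans (norm_tr_le_trnorm _).
rewrite ger0_norm // -iden -addrA lerDl.
by rewrite addr_ge0.
Qed.

End Holevo.


Section Tens.
Variable C : numClosedFieldType.

Definition pidx m n (k : 'I_(m * n)) : 'I_m * 'I_n :=
  enum_val (cast_ord (esym (@mxvec_cast m n)) k).
Definition iidx m n (p : 'I_m * 'I_n) : 'I_(m * n) :=
  cast_ord (@mxvec_cast m n) (enum_rank p).

Lemma pidxK m n : cancel (@pidx m n) (@iidx m n).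
Proof. by move=> k; rewrite /pidx /iidx enum_valK cast_ordKV. Qed.
Lemma iidxK m n : cancel (@iidx m n) (@pidx m n).
Proof. by move=> p; rewrite /pidx /iidx cast_ordK enum_rankK. Qed.

Lemma sum_pidx m n (F : 'I_m -> 'I_n -> C) :
  \sum_(k < m * n) F (pidx k).1 (pidx k).2 = \sum_i \sum_j F i j.
Proof.
rewrite pair_big /= (reindex (@iidx m n)) /=; last first.
  by exists (@pidx m n) => x _; rewrite ?pidxK ?iidxK.
by apply: eq_bigr => [[i j]] _; rewrite iidxK.
Qed.

Lemma tensE m1 n1 m2 n2 (A : 'M[C]_(m1, n1)) (B : 'M[C]_(m2, n2)) k l :
  tensmx A B k l = A (pidx k).1 (pidx l).1 * B (pidx k).2 (pidx l).2.
Proof. by rewrite mxE. Qed.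

Lemma tens_mul m1 n1 p1 m2 n2 p2 (A : 'M[C]_(m1, n1)) (B : 'M[C]_(m2, n2))
  (A' : 'M[C]_(n1, p1)) (B' : 'M[C]_(n2, p2)) :
  tensmx A B *m tensmx A' B' = tensmx (A *m A') (B *m B').
Proof.
apply/matrixP=> k l; rewrite [LHS]mxE tensE !mxE.
rewrite (eq_bigr (fun r => (A (pidx k).1 (pidx r).1 * A' (pidx r).1 (pidx l).1) *
   (B (pidx k).2 (pidx r).2 * B' (pidx r).2 (pidx l).2))); last first.
  by move=> r _; rewrite !tensE; ring.
rewrite (sum_pidx (fun i j => (A (pidx k).1 i * A' i (pidx l).1) *
   (B (pidx k).2 j * B' j (pidx l).2))).
rewrite mulr_suml; apply: eq_bigr => i _; rewrite mulr_sumr; apply: eq_bigr=> j _.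
by [].
Qed.

Lemma adjmx_tens m1 n1 m2 n2 (A : 'M[C]_(m1, n1)) (B : 'M[C]_(m2, n2)) :
  adjmx (tensmx A B) = tensmx (adjmx A) (adjmx B).
Proof. by apply/matrixP=> k l; rewrite !(mxE, tensE) rmorphM. Qed.

Lemma tr_tens m n (A : 'M[C]_m) (B : 'M[C]_n) :
  \tr (tensmx A B) = \tr A * \tr B.
Proof.
rewrite /mxtrace (eq_bigr (fun k => A (pidx k).1 (pidx k).1 * B (pidx k).2 (pidx k).2)).
  rewrite (sum_pidx (fun i j => A i i * B j j)) mulr_suml.
  by apply: eq_bigr => i _; rewrite mulr_sumr.
by move=> k _; rewrite tensE.
Qed.

Lemma tensDl m1 n1 m2 n2 (A A' : 'M[C]_(m1, n1)) (B : 'M[C]_(m2, n2)) :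
  tensmx (A + A') B = tensmx A B + tensmx A' B.
Proof. by apply/matrixP=> k l; rewrite tensE [RHS]mxE !tensE mxE mulrDl. Qed.

Lemma tensZr m1 n1 m2 n2 (c : C) (A : 'M[C]_(m1, n1)) (B : 'M[C]_(m2, n2)) :
  tensmx A (c *: B) = c *: tensmx A B.
Proof. by apply/matrixP=> k l; rewrite tensE [RHS]mxE tensE mxE mulrCA. Qed.

Lemma tens0l m1 n1 m2 n2 (B : 'M[C]_(m2, n2)) :
  tensmx (0 : 'M[C]_(m1, n1)) B = 0.
Proof. by apply/matrixP=> k l; rewrite tensE !mxE mul0r. Qed.

Lemma psd_tens m n (A : 'M[C]_m) (B : 'M[C]_n) :
  psdmx A -> psdmx B -> psdmx (tensmx A B).
Proof.
move=> pA pB.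
have -> : tensmx A B = adjmx (tensmx (sqrtmx A) (sqrtmx B)) *m
                       tensmx (sqrtmx A) (sqrtmx B).
  rewrite adjmx_tens tens_mul (sqrtmx_herm pA) (sqrtmx_herm pB).
  by rewrite !sqrtmx_sq.
exact: psd_adj_mul.
Qed.

Definition BD p m (M : 'I_p -> 'M[C]_m) : 'M[C]_(p * m) :=
  \sum_(k < p) tensmx (delta_mx k k) (M k).

Lemma eq_BD p m (M N : 'I_p -> 'M[C]_m) : (forall k, M k = N k) -> BD M = BD N.
Proof. by move=> h; apply: eq_bigr => k _; rewrite h. Qed.

Lemma BD_mul p m (M N : 'I_p -> 'M[C]_m) :
  BD M *m BD N = BD (fun k => M k *m N k).
Proof.
rewrite /BD mulmx_suml; apply: eq_bigr => k _.
rewrite mulmx_sumr (bigD1 k) //= big1 ?addr0.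
  by rewrite tens_mul mul_delta_mx.
move=> l nlk; rewrite tens_mul mul_delta_mx_cond.
by rewrite eq_sym (negbTE nlk) mulr0n tens0l.
Qed.

Lemma adjmx_delta p (i j : 'I_p) : adjmx (delta_mx i j : 'M[C]_p) = delta_mx j i.
Proof.
apply/matrixP=> a b; rewrite !mxE.
by case: (a == j); case: (b == i); rewrite /= ?rmorph1 ?rmorph0.
Qed.

Lemma adjmx_BD p m (M : 'I_p -> 'M[C]_m) : adjmx (BD M) = BD (fun k => adjmx (M k)).
Proof.
rewrite /BD adjmx_sum; apply: eq_bigr => k _; by rewrite adjmx_tens adjmx_delta.
Qed.

Lemma tr_BD p m (M : 'I_p -> 'M[C]_m) : \tr (BD M) = \sum_k \tr (M k).
Proof.
rewrite /BD (big_morph _ (@mxtraceD _ _) (@mxtrace0 _ _)); apply: eq_bigr => k _; rewrite tr_tens.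
have -> : \tr (delta_mx k k : 'M[C]_p) = 1.
  rewrite /mxtrace (bigD1 k) //= big1 ?addr0; first by rewrite mxE !eqxx.
  by move=> j njk; rewrite mxE (negbTE njk).
by rewrite mul1r.
Qed.

Lemma psd_delta p (k : 'I_p) : psdmx (delta_mx k k : 'M[C]_p).
Proof.
have -> : (delta_mx k k : 'M[C]_p) = adjmx (delta_mx k k) *m delta_mx k k.
  by rewrite adjmx_delta mul_delta_mx.
exact: psd_adj_mul.
Qed.

Lemma psd_BD p m (M : 'I_p -> 'M[C]_m) : (forall k, psdmx (M k)) -> psdmx (BD M).
Proof.
move=> h; apply: psd_sum => k _; apply: psd_tens => //; exact: psd_delta.
Qed.

Lemma sqrt_BD p m (M : 'I_p -> 'M[C]_m) : (forall k, psdmx (M k)) ->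
  sqrtmx (BD M) = BD (fun k => sqrtmx (M k)).
Proof.
move=> h; have pS : psdmx (BD (fun k => sqrtmx (M k))).
  by apply: psd_BD => k; exact: sqrtmx_psd.
rewrite -{1}(sqrtmx_unique pS) BD_mul; congr sqrtmx.
by apply: eq_BD => k; rewrite sqrtmx_sq.
Qed.

Lemma BDZ p m (c : C) (M : 'I_p -> 'M[C]_m) : c *: BD M = BD (fun k => c *: M k).
Proof.
by rewrite /BD scaler_sumr; apply: eq_bigr => k _; rewrite tensZr.
Qed.

Lemma sqrtmxZ n (c : C) (A : 'M[C]_n) : 0 <= c -> psdmx A ->
  sqrtmx (c *: A) = sqrtC c *: sqrtmx A.
Proof.
move=> c0 pA; have pS : psdmx (sqrtC c *: sqrtmx A).
  by apply: psdZ; rewrite ?sqrtC_ge0 //; exact: sqrtmx_psd.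
rewrite -(sqrtmx_unique pS); congr sqrtmx.
by rewrite -scalemxAr -scalemxAl sqrtmx_sq // scalerA -expr2 sqrtCK.
Qed.

Lemma trnorm_BD p m (Z : 'I_p -> 'M[C]_m) :
  trnorm (BD Z) = \sum_k trnorm (Z k).
Proof.
rewrite /trnorm adjmx_BD BD_mul sqrt_BD ?tr_BD //.
by move=> k; exact: psd_adj_mul.
Qed.

Lemma trnormZ n (c : C) (Z : 'M[C]_n) : 0 <= c -> trnorm (c *: Z) = c * trnorm Z.
Proof.
move=> c0; rewrite /trnorm adjmxZ -scalemxAr -scalemxAl scalerA.
rewrite sqrtmxZ ?mxtraceZ //; last exact: psd_adj_mul.
  by rewrite (conj_Creal (ger0_real c0)) -expr2 sqrCK.
by rewrite (conj_Creal (ger0_real c0)) mulr_ge0.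
Qed.

End Tens.


Local Close Scope ring_scope.
Lemma prod_bool_nat (I : finType) (c : I -> bool) :
  ((if [forall k, c k] then 1 else 0) = \prod_k (c k : nat))%N.
Proof.
case: forallP => h.
  by rewrite big1 // => k _; rewrite h.
have [k nk] : exists k, ~~ c k.
  by apply/existsP; rewrite -negb_forall; apply/forallP.
by rewrite (bigD1 k) //= (negbTE nk) mul0n.
Qed.

Lemma count_agree N (P : pred 'I_N) (v : 'I_N -> bool) :
  #|[pred u : {ffun 'I_N -> bool} | [forall k, P k ==> (u k == v k)]]| =
  (2 ^ #|[pred k | ~~ P k]|)%N.
Proof.
rewrite -sum1_card big_mkcond /=.
transitivity (\sum_(u : {ffun 'I_N -> bool}) \prod_k ((P k ==> (u k == v k)) : nat)).
  apply: eq_bigr => u _; rewrite inE; exact: prod_bool_nat.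
rewrite -(@bigA_distr_bigA nat 0%N 1%N muln addn 'I_N bool
   (fun k b => ((P k ==> (b == v k)) : nat))).
rewrite -prod_nat_const [RHS]big_mkcond /=; apply: eq_bigr => k _.
rewrite big_bool inE /=; case: (P k) => //=.
by case: (v k).
Qed.

Lemma card_ffun_bool N : #|{: {ffun 'I_N -> bool}}| = (2 ^ N)%N.
Proof. by rewrite card_ffun card_bool card_ord. Qed.

Lemma card_ge N (len : nat) : len <= N ->
  #|[pred k : 'I_N | ~~ (k < len)]| = (N - len)%N.
Proof.
move=> leN; rewrite -sum1_card big_mkcond /=.
rewrite (eq_bigr (fun k : 'I_N => ((len <= k) : nat))); last first.
  by move=> k _; rewrite inE -leqNgt; case: (len <= k).
rewrite -(big_mkord xpredT (fun k => ((len <= k) : nat))).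
rewrite (big_cat_nat (leq0n len) leN) /= big_nat_cond big1 ?add0n; last first.
  by move=> k /andP[/andP[_ kl] _]; rewrite leqNgt kl.
rewrite big_nat_cond (eq_bigr (fun _ => 1%N)); last first.
  by move=> k /andP[/andP[lk _] _]; rewrite lk.
by rewrite -big_nat_cond sum_nat_const_nat muln1.
Qed.

Lemma bit_of0 k : bit_of k 0 = odd k.
Proof. by rewrite /bit_of expn0 divn1. Qed.

Lemma bit_ofS k j : bit_of k j.+1 = bit_of k./2 j.
Proof. by rewrite /bit_of expnS divnMA divn2. Qed.

Lemma bits_exist i (pre : nat -> bool) :
  exists k, (k < 2 ^ i)%N /\ forall j, (j < i)%N -> bit_of k j = pre j.
Proof.
elim: i pre => [|i IH] pre; first by exists 0%N.
have [k' [lk' hk']] := IH (fun j => pre j.+1).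
exists (pre 0%N + k'.*2)%N; split.
  rewrite expnS mul2n; case: (pre 0%N) => /=; last by rewrite add0n ltn_double.
  by rewrite add1n ltn_Sdouble.
case=> [|j] lj; first by rewrite bit_of0 oddD odd_double addbF oddb.
by rewrite bit_ofS half_bit_double hk'.
Qed.

Lemma bits_unique i k k' : (k < 2 ^ i)%N -> (k' < 2 ^ i)%N ->
  (forall j, (j < i)%N -> bit_of k j = bit_of k' j) -> k = k'.
Proof.
elim: i k k' => [|i IH] k k'.
  by rewrite expn0 !ltnS !leqn0 => /eqP-> /eqP->.
move=> lk lk' h.
have o : odd k = odd k' by rewrite -!bit_of0 h.
have hh : k./2 = k'./2.
  apply: IH.
  - by rewrite ltn_half_double -mul2n -expnS.
  - by rewrite ltn_half_double -mul2n -expnS.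
  by move=> j lj; rewrite -!bit_ofS h.
by rewrite -(odd_double_half k) -(odd_double_half k') o hh.
Qed.

Lemma bits_ofE N (u : {ffun 'I_N -> bool}) (k : 'I_N) : bits_of u k = u k.
Proof. by rewrite /bits_of valK. Qed.

Local Open Scope ring_scope.

Section Rho.
Variable C : numClosedFieldType.
Variable d : nat.
Variable W : bool -> 'M[C]_d.
Hypothesis HW : forall x, densitymx (W x).

Lemma rhoN_density n u : psdmx (rhoN W n u) /\ \tr (rhoN W n u) = 1.
Proof.
elim: n u => [|n IH] u /=; first exact: HW.
have [p1 t1] := IH (fun k => u k.*2 (+) u k.*2.+1).
have [p2 t2] := IH (fun k => u k.*2.+1).
by split; [exact: psd_tens | rewrite tr_tens t1 t2 mulr1].
Qed.

Lemma rho_psd n (u : {ffun 'I_(2 ^ n) -> bool}) : psdmx (rho W u).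
Proof. exact: (@rhoN_density n (bits_of u)).1. Qed.

Lemma rho_tr n (u : {ffun 'I_(2 ^ n) -> bool}) : \tr (rho W u) = 1.
Proof. exact: (@rhoN_density n (bits_of u)).2. Qed.

Lemma rhobar_psd n len pre : psdmx (rhobar W n len pre).
Proof.
apply: psdZ; last by apply: psd_sum => v _; exact: rho_psd.
by rewrite invr_ge0 ler0n.
Qed.

Lemma rhobar_ext n len pre pre' : (forall j, (j < len)%N -> pre j = pre' j) ->
  rhobar W n len pre = rhobar W n len pre'.
Proof.
move=> h; rewrite /rhobar; congr (_ *: _); apply: eq_bigl => v.
apply: eq_forallb => k; case: ltnP => // lk; by rewrite h.
Qed.

End Rho.


Section Avg.
Variable C : numClosedFieldType.

Lemma dcount (I J : finType) (r : I -> J -> bool) (F : I -> J -> C) :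
  \sum_i \sum_(j | r i j) F i j = \sum_j \sum_(i | r i j) F i j.
Proof.
rewrite (eq_bigr (fun i => \sum_j (if r i j then F i j else 0))); last first.
  by move=> i _; rewrite big_mkcond.
rewrite exchange_big; apply: eq_bigr => j _.
by rewrite [RHS]big_mkcond.
Qed.

Lemma bits_of_lt N (u : {ffun 'I_N -> bool}) j (h : (j < N)%N) :
  bits_of u j = u (Ordinal h).
Proof. by rewrite /bits_of insubT. Qed.

Variable d : nat.
Variable W : bool -> 'M[C]_d.
Hypothesis HW : forall x, densitymx (W x).
Variable n : nat.
Local Notation N := (2 ^ n)%N.
Local Notation T := {ffun 'I_N -> bool}.

Definition agree len (u v : T) := [forall k : 'I_N, (k < len)%N ==> (u k == v k)].

Lemma agree_sym len u v : agree len u v = agree len v u.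
Proof. by apply: eq_forallb => k; rewrite eq_sym. Qed.

Lemma count_agree_len len (v : T) : (len <= N)%N ->
  #|[pred u : T | agree len u v]| = (2 ^ (N - len))%N.
Proof.
move=> lN; rewrite -(card_ge lN) -(count_agree (fun k : 'I_N => (k < len)%N) v).
by apply: eq_card => u; rewrite !inE.
Qed.

Lemma rhobar_agree len (u : T) :
  rhobar W n len (bits_of u) =
  ((2 ^ (N - len))%:R)^-1 *: \sum_(v | agree len v u) rho W v.
Proof.
rewrite /rhobar; congr (_ *: _); apply: eq_bigl => v.
by apply: eq_forallb => k; rewrite bits_ofE.
Qed.

Lemma avg_lemma len (g : T -> 'M[C]_(dimN d n)) : (len <= N)%N ->
  (forall u v, agree len u v -> g u = g v) ->
  \sum_u \tr (g u *m rho W u) = \sum_u \tr (g u *m rhobar W n len (bits_of u)).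
Proof.
move=> lN hg.
have ne : ((2 ^ (N - len))%:R : C) != 0 by rewrite pnatr_eq0 expn_eq0.
transitivity (\sum_u ((2 ^ (N - len))%:R)^-1 *
     \sum_(v | agree len v u) \tr (g v *m rho W v)); last first.
  apply: eq_bigr => u _; rewrite rhobar_agree -scalemxAr mxtraceZ.
  congr (_ * _); rewrite mulmx_sumr raddf_sum; apply: eq_bigr => v avu.
  by rewrite (hg u v) // agree_sym.
rewrite -mulr_sumr [X in _ = _ * X]dcount.
rewrite [X in _ = _ * X](eq_bigr (fun v => ((2 ^ (N - len))%:R) * \tr (g v *m rho W v))).
  by rewrite -mulr_sumr mulrA mulVf // mul1r.
move=> v _; rewrite sumr_const.
have -> : #|[pred u | agree len v u]| = (2 ^ (N - len))%N.
  rewrite -(count_agree_len v lN); apply: eq_card => u; rewrite !inE.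
  by rewrite agree_sym.
by rewrite mulr_natl.
Qed.

Lemma sum_prefix i (F : (nat -> bool) -> C) : (i <= N)%N ->
  (forall p p', (forall j, (j < i)%N -> p j = p' j) -> F p = F p') ->
  \sum_(u : T) F (bits_of u) = (2 ^ (N - i))%:R * \sum_(k < 2 ^ i) F (bit_of k).
Proof.
move=> iN hF.
pose rel (k : 'I_(2 ^ i)) (u : T) :=
  [forall j : 'I_N, (j < i)%N ==> (u j == bit_of k j)].
have cnt : forall k : 'I_(2 ^ i), #|[pred u | rel k u]| = (2 ^ (N - i))%N.
  move=> k; rewrite -(card_ge iN).
  rewrite -(count_agree (fun j : 'I_N => (j < i)%N) (fun j => bit_of k j)).
  by apply: eq_card => u; rewrite !inE.
transitivity (\sum_k \sum_(u | rel k u) F (bits_of u)); last first.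
  rewrite mulr_sumr; apply: eq_bigr => k _.
  rewrite (eq_bigr (fun _ => F (bit_of k))); last first.
    move=> u /forallP ru; apply: hF => j lj.
    have jN : (j < N)%N by exact: leq_trans lj iN.
    rewrite (bits_of_lt u jN); move: (ru (Ordinal jN)); rewrite /= lj /=.
    by move/eqP.
  by rewrite sumr_const cnt mulr_natl.
rewrite dcount; apply: eq_bigr => u _.
have [k0 [lk0 hk0]] := bits_exist i (bits_of u).
have one : #|[pred k : 'I_(2 ^ i) | rel k u]| = 1%N.
  apply: eq_trans (card1 (Ordinal lk0)); apply: eq_card => k; rewrite !inE.
  apply/idP/idP.
    move=> /forallP rk; apply/eqP/val_inj => /=.
    apply: bits_unique => // j lj.
    have jN : (j < N)%N by exact: leq_trans lj iN.
    rewrite hk0 // (bits_of_lt u jN).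
    by move: (rk (Ordinal jN)); rewrite /= lj /= => /eqP ->.
  move/eqP=> ->; apply/forallP => j; apply/implyP => lj.
  by rewrite /= hk0 // bits_ofE.
by rewrite sumr_const one.
Qed.

End Avg.


Section PerI.
Variable C : numClosedFieldType.
Variable d : nat.
Variable W : bool -> 'M[C]_d.
Hypothesis HW : forall x, densitymx (W x).
Variable n : nat.
Local Notation N := (2 ^ n)%N.
Local Notation T := {ffun 'I_N -> bool}.
Variable A : {set 'I_N}.
Variable i : 'I_N.
Hypothesis iA : i \in A.

Definition preu (u : T) (b : bool) : nat -> bool :=
  fun j => if j == nat_of_ord i then b else bits_of u j.
Definition Rb (u : T) b := rhobar W n i.+1 (preu u b).
Definition P0 (u : T) := nonneg_proj (sqrtmx (Rb u false) - sqrtmx (Rb u true)).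
Definition Qm (u : T) := 1%:M - dec_proj W A u i.

Lemma dec_projE u : dec_proj W A u i = if u i then 1%:M - P0 u else P0 u.
Proof. by rewrite /dec_proj iA. Qed.

Lemma Rb_psd u b : psdmx (Rb u b).
Proof. exact: rhobar_psd. Qed.

Lemma agree_i (u v : T) : agree i.+1 u v -> u i = v i.
Proof. by move=> /forallP /(_ i); rewrite ltnSn /= => /eqP. Qed.

Lemma agree_bits (u v : T) j : agree i.+1 u v -> (j < i.+1)%N -> bits_of u j = bits_of v j.
Proof.
move=> /forallP h lj; have jN : (j < N)%N by exact: leq_trans lj (ltn_ord i).
rewrite !(bits_of_lt _ jN); move: (h (Ordinal jN)); rewrite /= lj /=.
by move/eqP.
Qed.

Lemma Rb_agree (u v : T) b : agree i.+1 u v -> Rb u b = Rb v b.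
Proof.
move=> h; apply: rhobar_ext => j lj; rewrite /preu.
by case: eqP => // _; exact: agree_bits.
Qed.

Lemma Qm_agree (u v : T) : agree i.+1 u v -> Qm u = Qm v.
Proof.
move=> h; rewrite /Qm !dec_projE /P0 (agree_i h) (Rb_agree false h).
by rewrite (Rb_agree true h).
Qed.

Lemma Rb_self u : Rb u (u i) = rhobar W n i.+1 (bits_of u).
Proof.
apply: rhobar_ext => j lj; rewrite /preu; case: eqP => // ->.
by rewrite bits_ofE.
Qed.

Lemma step2 : \sum_u \tr (Qm u *m rho W u) = \sum_u \tr (Qm u *m Rb u (u i)).
Proof.
rewrite (@avg_lemma _ _ W n i.+1 Qm) //; last exact: Qm_agree.
by apply: eq_bigr => u _; rewrite Rb_self.
Qed.

Definition flipf (u : T) : T := [ffun k => if k == i then ~~ u k else u k].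

Lemma flipK : involutive flipf.
Proof.
move=> u; apply/ffunP => k; rewrite !ffunE.
by case: eqP => // ->; rewrite negbK.
Qed.

Lemma flip_i u : flipf u i = ~~ u i.
Proof. by rewrite ffunE eqxx. Qed.

Lemma Rb_flip u b : Rb (flipf u) b = Rb u b.
Proof.
apply: rhobar_ext => j _; rewrite /preu; case: eqP => // nji.
rewrite /bits_of; case: insubP => //= k _ vk; rewrite ffunE.
by case: eqP => // ki; case: nji; rewrite -vk ki.
Qed.

Lemma P0_flip u : P0 (flipf u) = P0 u.
Proof. by rewrite /P0 !Rb_flip. Qed.

Definition Tu (u : T) := \tr (Qm u *m Rb u (u i)).
Definition Hu (u : T) :=
  \tr ((1%:M - P0 u) *m Rb u false) + \tr (P0 u *m Rb u true).

Lemma T_flip u : Tu u + Tu (flipf u) = Hu u.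
Proof.
rewrite /Tu /Hu /Qm !dec_projE flip_i P0_flip !Rb_flip.
have e : 1%:M - (1%:M - P0 u) = P0 u by rewrite opprB addrC subrK.
by case: (u i) => /=; rewrite e // addrC.
Qed.

Lemma sum_T : \sum_u Tu u = 2^-1 * \sum_u Hu u.
Proof.
have e : \sum_u Tu (flipf u) = \sum_u Tu u.
  by rewrite [RHS](reindex_inj (can_inj flipK)).
have : \sum_u Hu u = 2%:R * \sum_u Tu u.
  rewrite -(eq_bigr _ (fun u _ => T_flip u)) big_split /= e.
  by rewrite mulr2n mulrDl mul1r.
move=> ->; rewrite mulrA mulVf ?mul1r //.
by rewrite pnatr_eq0.
Qed.

Definition Zu (u : T) := sqrtmx (Rb u false) *m sqrtmx (Rb u true).

Lemma step4 u : Hu u <= trnorm (Zu u).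
Proof. exact: holevo (Rb_psd u false) (Rb_psd u true). Qed.

Definition prek (k : nat) (b : bool) : nat -> bool :=
  fun j => if j == nat_of_ord i then b else bit_of k j.
Definition Rk (k : nat) b := rhobar W n i.+1 (prek k b).
Definition Zk (k : nat) := sqrtmx (Rk k false) *m sqrtmx (Rk k true).

Lemma step5 : \sum_u trnorm (Zu u) =
  (2 ^ (N - i))%:R * \sum_(k < 2 ^ i) trnorm (Zk k).
Proof.
pose F (p : nat -> bool) :=
  trnorm (sqrtmx (rhobar W n i.+1 (fun j => if j == nat_of_ord i then false else p j))
      *m sqrtmx (rhobar W n i.+1 (fun j => if j == nat_of_ord i then true else p j))).
have := @sum_prefix C n i F (ltnW (ltn_ord i)).
apply.
move=> p p' h; rewrite /F.
have e : forall b, rhobar W n i.+1 (fun j => if j == nat_of_ord i then b else p j) =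
                rhobar W n i.+1 (fun j => if j == nat_of_ord i then b else p' j).
  move=> b; apply: rhobar_ext => j lj; case: eqP => // nji; apply: h.
  by rewrite ltn_neqAle (introN eqP nji) -ltnS.
by rewrite !e.
Qed.

Lemma split_BD b : split_chan W i b =
  BD (fun k : 'I_(2 ^ i) => ((2 ^ i)%:R)^-1 *: Rk k b).
Proof.
rewrite /split_chan /BD. apply: eq_bigr => k _. rewrite [RHS]tensZr. reflexivity.
Qed.

Lemma step6 : sqrtC (Fid (split_chan W i)) =
  \sum_(k < 2 ^ i) ((2 ^ i)%:R)^-1 * trnorm (Zk k).
Proof.
rewrite /Fid !split_BD.
set c : C := ((2 ^ i)%:R)^-1.
have c0 : 0 <= c by rewrite invr_ge0 ler0n.
have pRk : forall k b, psdmx (Rk k b) by move=> k b; exact: rhobar_psd.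
have pR : forall k b, psdmx (c *: Rk k b).
  by move=> k b; apply: psdZ => //; exact: pRk.
rewrite !sqrt_BD // BD_mul.
have eB : BD (fun k : 'I_(2 ^ i) => sqrtmx (c *: Rk k false) *m sqrtmx (c *: Rk k true))
   = BD (fun k : 'I_(2 ^ i) => c *: Zk k).
  apply: eq_BD => k; rewrite (sqrtmxZ c0 (pRk k false)) (sqrtmxZ c0 (pRk k true)).
  by rewrite -scalemxAl -scalemxAr scalerA -expr2 sqrtCK.
rewrite eB trnorm_BD.
rewrite sqrCK; last first.
  apply: sumr_ge0 => k _; exact: trnorm_ge0.
by apply: eq_bigr => k _; rewrite trnormZ.
Qed.

Lemma per_i : ((2 ^ N)%:R)^-1 * \sum_u \tr (Qm u *m rho W u) <=
  2^-1 * sqrtC (Fid (split_chan W i)).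
Proof.
have e2 : \sum_u \tr (Qm u *m rho W u) = \sum_u Tu u by rewrite step2.
rewrite e2 sum_T step6 -mulr_sumr.
set S := \sum_(k < 2 ^ i) trnorm (Zk k).
have le1 : \sum_u Hu u <= (2 ^ (N - i))%:R * S.
  by rewrite -step5; apply: ler_sum => u _; exact: step4.
have eN : (2 ^ N)%:R = (2 ^ (N - i))%:R * (2 ^ i)%:R :> C.
  by rewrite -natrM -expnD subnK // ltnW.
have n1 : (2 ^ (N - i))%:R != 0 :> C by rewrite pnatr_eq0 expn_eq0.
have n2 : (2 ^ i)%:R != 0 :> C by rewrite pnatr_eq0 expn_eq0.
have n3 : 2 != 0 :> C by rewrite pnatr_eq0.
have -> : 2^-1 * ((2 ^ i)%:R^-1 * S) =
    ((2 ^ N)%:R)^-1 * (2^-1 * ((2 ^ (N - i))%:R * S)).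
  rewrite eN; field.
  by rewrite n1 n2.
rewrite ler_wpM2l // ?invr_ge0 ?ler0n //.
by rewrite ler_wpM2l // invr_ge0 ler0n.
Qed.

End PerI.


Section Final.
Variable C : numClosedFieldType.

Lemma foldl_adj m (I : Type) (Pi : I -> 'M[C]_m) (s : seq I) (M0 : 'M[C]_m) :
  (forall i, herm (Pi i)) ->
  adjmx (foldl (fun M i => Pi i *m M) M0 s) =
  adjmx M0 *m foldr (fun i M => Pi i *m M) 1%:M s.
Proof.
move=> h; elim: s M0 => [|i s IH] M0 /=; first by rewrite mulmx1.
by rewrite IH adjmxM (h i) mulmxA.
Qed.

Variable d : nat.
Variable W : bool -> 'M[C]_d.
Hypothesis HW : forall x, densitymx (W x).
Variable n : nat.
Local Notation N := (2 ^ n)%N.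
Local Notation T := {ffun 'I_N -> bool}.
Variable A : {set 'I_N}.

Lemma dec_proj_prop (u : T) i :
  herm (dec_proj W A u i) /\ dec_proj W A u i *m dec_proj W A u i = dec_proj W A u i.
Proof.
rewrite /dec_proj; case: (i \in A); last first.
  by split; [rewrite /herm adjmx1 | rewrite mulmx1].
set D := (X in nonneg_proj X).
have hD : herm D.
  by rewrite /herm /D adjmxB !sqrtmx_herm //; exact: rhobar_psd.
have hP := nnp_herm hD; have PP := nnp_idem hD.
case: (u i); split => //.
- by rewrite /herm adjmxB adjmx1 hP.
- by rewrite mulmxBl mul1mx mulmxBr mulmx1 PP subrr subr0.
Qed.

Lemma succE (u : T) : succ_term W A u =
  \tr (proj_seq_left W A u *m rho W u *m adjmx (proj_seq_left W A u)).
Proof.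
rewrite /succ_term /proj_seq_left foldl_adj ?adjmx1 ?mul1mx //.
by move=> i; case: (dec_proj_prop u i).
Qed.

Lemma succ_ge0 (u : T) : 0 <= succ_term W A u.
Proof. by rewrite succE; apply: tr_conj_psd; exact: rho_psd. Qed.

Lemma succ_bound (u : T) : 1 - succ_term W A u <=
  4 * \sum_(i in A) \tr (Qm W A i u *m rho W u).
Proof.
rewrite succE -[X in X - _](rho_tr HW u).
apply: le_trans (gao (rho_psd HW u) (enum 'I_N) (dec_proj_prop u)) _.
rewrite le_eqVlt; apply/orP; left; apply/eqP; congr (_ * _).
transitivity (\sum_(i : 'I_N) \tr ((1%:M - dec_proj W A u i) *m rho W u)).
  by rewrite enumT.
rewrite (bigID (mem A)) /= [X in _ + X]big1 ?addr0.
  by [].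
move=> i niA.
by rewrite /dec_proj (negbTE niA) subrr mul0mx mxtrace0.
Qed.

Definition sB := \sum_(i in A) 2^-1 * sqrtC (Fid (split_chan W i)).

Lemma sB_ge0 : 0 <= sB.
Proof.
apply: sumr_ge0 => i _; rewrite mulr_ge0 ?invr_ge0 ?ler0n // sqrtC_ge0.
by rewrite /Fid exprn_ge0 // trnorm_ge0.
Qed.

Lemma card_T : #|{: T}| = (2 ^ N)%N.
Proof. exact: card_ffun_bool. Qed.

Lemma PeE K : Pe W K A = ((2 ^ N)%:R)^-1 * \sum_(u : T) (1 - succ_term W A u).
Proof.
have nz : (2 ^ N)%:R != 0 :> C by rewrite pnatr_eq0 expn_eq0.
rewrite /Pe sumrB sumr_const card_T mulrBr.
by rewrite mulVf.
Qed.

Lemma Pe_le4 K : Pe W K A <= 4 * sB.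
Proof.
rewrite PeE.
have H1 : ((2 ^ N)%:R)^-1 * \sum_(u : T) (1 - succ_term W A u) <=
   ((2 ^ N)%:R)^-1 * \sum_(u : T) 4 * \sum_(i in A) \tr (Qm W A i u *m rho W u).
  rewrite ler_wpM2l ?invr_ge0 ?ler0n //.
  by apply: ler_sum => u _; exact: succ_bound.
apply: le_trans H1 _.
rewrite -mulr_sumr mulrCA ler_wpM2l //.
rewrite exchange_big mulr_sumr /sB.
apply: ler_sum => i iA.
exact: per_i.
Qed.

Lemma Pe_le1 K : Pe W K A <= 1.
Proof.
rewrite /Pe lerBlDr lerDl mulr_ge0 ?invr_ge0 ?ler0n //.
by apply: sumr_ge0 => u _; exact: succ_ge0.
Qed.

Lemma Pe_bound_ok K : Pe W K A <= Pe_bound W A.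
Proof.
have s0 := sB_ge0.
rewrite /Pe_bound -/sB.
set t := sqrtC sB.
have t0 : 0 <= t by rewrite sqrtC_ge0.
have ts : sB = t ^+ 2 by rewrite sqrtCK.
have r2t : 2 * t \is Num.real by rewrite ger0_real // mulr_ge0.
case/orP: (real_leVge r2t (real1 C)) => h.
- apply: le_trans (Pe_le4 K) _.
  rewrite ts.
  have -> : 4 * t ^+ 2 = (2 * t) * (2 * t) by rewrite expr2; ring.
  rewrite -[X in _ <= X]mulr1 ler_wpM2l // mulr_ge0 //.
- exact: le_trans (Pe_le1 K) h.
Qed.

Lemma sum_frozen K : #|A| = K ->
  \sum_(uf : T) Pe_frozen W K A uf = (2 ^ N)%:R * Pe W K A.
Proof.
move=> HK.
have nzN : (2 ^ N)%:R != 0 :> C by rewrite pnatr_eq0 expn_eq0.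
have nzK : (2 ^ K)%:R != 0 :> C by rewrite pnatr_eq0 expn_eq0.
rewrite /Pe_frozen /Pe sumrB sumr_const card_T -mulr_sumr.
rewrite (dcount (fun (uf u : T) => [forall k, (k \notin A) ==> (u k == uf k)])
               (fun _ u => succ_term W A u)).
have cnt : forall u : T,
    #|[pred uf : T | [forall k, (k \notin A) ==> (u k == uf k)]]| = (2 ^ K)%N.
  move=> u; rewrite -HK.
  have -> : #|A| = #|[pred k | ~~ (k \notin A)]|.
    by apply: eq_card => k; rewrite !inE negbK.
  rewrite -(count_agree (fun k => k \notin A) u); apply: eq_card => uf.
  rewrite !inE; apply: eq_forallb => k; by rewrite eq_sym.
rewrite (eq_bigr (fun u => (2 ^ K)%:R * succ_term W A u)); last first.
  by move=> u _; rewrite sumr_const cnt mulr_natl.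
rewrite -mulr_sumr mulrA mulVf // mul1r mulrBr mulr1 mulrA mulfV // mul1r.
by [].
Qed.

Lemma frozen_exists K : #|A| = K ->
  exists uf : T, Pe_frozen W K A uf <= Pe_bound W A.
Proof.
move=> HK.
case: (boolP [exists uf : T, Pe_frozen W K A uf <= Pe_bound W A]).
  by move=> /existsP [uf h]; exists uf.
rewrite negb_exists => /forallP hn; exfalso.
have b0 : 0 <= Pe_bound W A.
  by rewrite /Pe_bound mulr_ge0 // sqrtC_ge0 sB_ge0.
have realF : forall uf, Pe_frozen W K A uf \is Num.real.
  move=> uf; rewrite /Pe_frozen rpredB ?real1 // ger0_real // mulr_ge0 //.
    by rewrite invr_ge0 ler0n.
  by apply: sumr_ge0 => u _; exact: succ_ge0.
have lt : forall uf, Pe_bound W A < Pe_frozen W K A uf.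
  by move=> uf; rewrite real_ltNge ?hn // ger0_real.
have : \sum_(uf : T) Pe_bound W A < \sum_(uf : T) Pe_frozen W K A uf.
  apply: ltr_sum => //; apply/hasP; exists [ffun=> false] => //.
have e : \sum_(uf : T) Pe_bound W A = (2 ^ N)%:R * Pe_bound W A.
  by rewrite sumr_const card_T mulr_natl.
rewrite sum_frozen // e.
have h1 : (2 ^ N)%:R * Pe W K A <= (2 ^ N)%:R * Pe_bound W A.
  by rewrite ler_wpM2l ?ler0n // Pe_bound_ok.
by move=> h2; have := lt_le_trans h2 h1; rewrite ltxx.
Qed.

End Final.

Theorem proposition2 (C : numClosedFieldType) (d : nat) (W : bool -> 'M[C]_d)
  (HW : forall x : bool, densitymx (W x))
  (n K : nat) (A : {set 'I_(2 ^ n)}) (HK : #|A| = K) :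
  Pe W K A <= Pe_bound W A /\
  exists uf : {ffun 'I_(2 ^ n) -> bool}, Pe_frozen W K A uf <= Pe_bound W A.
Proof.
split; first exact: Pe_bound_ok.
exact: frozen_exists.
Qed.
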